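(* Consider the following recursive procedure on input $(S,C,w)$, where $S$ is a path with vertex set $V$, $w:V\to\mathbb R_{\ge0}$, and $C$ is a partial coloring with domain $\mathrm{support}(w)=\{v:w(v)>0\}$: if $V\setminus\mathrm{support}(w)$ is a cover of $(S,C)$, return $X=V\setminus\mathrm{support}(w)$; otherwise choose $x,y,z\in\mathrm{support}(w)$ with $C(x)=C(z)\neq C(y)$ and $y$ between $x$ and $z$ on $S$, let $\varepsilon=\min\{w(x),w(y),w(z)\}$, let $w_1=w-\varepsilon\cdot\mathbf 1_{\{x,y,z\}}$, and return the output of the procedure on $(S,C|_{\mathrm{support}(w_1)},w_1)$. Then the procedure is well defined (whenever $V\setminus\mathrm{support}(w)$ is not a cover, such $x,y,z$ exist), terminates, and returns a cover $X$ of $(S,C)$ with $w(X)\le 3\,\mathrm{OPT}(S,C,w)$.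
   Context: A partial coloring of a tree (here a path) is convex if it can be extended to a total coloring in which every color class induces a connected subtree. A set $X\subseteq V$ is a cover of $(T,C)$ if the restriction of $C$ to $\mathrm{Domain}(C)\setminus X$ is convex. $w(X)=\sum_{v\in X}w(v)$, and $\mathrm{OPT}(T,C,w)$ is the minimum of $w(X)$ over all covers $X$ (equivalently the minimum cost of a convex recoloring). *)

(* Defs.v *)
From HB Require Import structures.
From mathcomp Require Import all_boot all_order all_algebra.
From mathcomp Require Import boolp.
Set Implicit Arguments. Unset Strict Implicit. Unset Printing Implicit Defensive.
Import Order.TTheory GRing.Theory Num.Theory.
Local Open Scope ring_scope.

(* The path S has vertex set V = 'I_n, with edges {i, i+1}.
   A partial coloring is C : 'I_n -> option K (None = uncolored).
   A total coloring may use the colors of K and arbitrarily many fresh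
   colors (the [nat] summand). *)

(* a set of vertices induces a connected subpath iff it is an interval *)
Definition path_connected n (P : 'I_n -> Prop) : Prop :=
  forall i j k : 'I_n, (i <= j <= k)%N -> P i -> P k -> P j.

Definition extends n (K : Type) (C : 'I_n -> option K) (f : 'I_n -> K + nat) :=
  forall v c, C v = Some c -> f v = inl c.

Definition convex n (K : Type) (C : 'I_n -> option K) : Prop :=
  exists f : 'I_n -> K + nat, extends C f /\
    forall c : K + nat, path_connected (fun v => f v = c).

Definition is_cover n (K : Type) (C : 'I_n -> option K) (X : {set 'I_n}) :=
  convex (fun v => if v \in X then None else C v).

Definition wsum (R : realFieldType) n (w : 'I_n -> R) (X : {set 'I_n}) : R :=
  \sum_(v in X) w v.

(* OPT(S,C,w) = minimum of w(X) over all covers X (setT is always a cover) *)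
Definition OPT (R : realFieldType) n (K : Type) (C : 'I_n -> option K)
    (w : 'I_n -> R) : R :=
  \big[Num.min/wsum w setT]_(X : {set 'I_n} | `[< is_cover C X >]) wsum w X.

Definition support (R : realFieldType) n (w : 'I_n -> R) : {set 'I_n} :=
  [set v | 0 < w v].

Definition zero_set (R : realFieldType) n (w : 'I_n -> R) : {set 'I_n} :=
  ~: support w.

Definition good_triple (R : realFieldType) n (K : Type)
    (C : 'I_n -> option K) (w : 'I_n -> R) (x y z : 'I_n) : Prop :=
  [/\ 0 < w x /\ 0 < w y /\ 0 < w z, C x = C z, C x <> C y &
      ((x < y < z)%N \/ (z < y < x)%N)].

Definition update_w (R : realFieldType) n (w : 'I_n -> R) (x y z : 'I_n) :
  'I_n -> R :=
  fun v => w v - (if v \in [set x; y; z]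
                  then Num.min (w x) (Num.min (w y) (w z)) else 0).

Definition restrict (R : realFieldType) n (K : Type) (C : 'I_n -> option K)
  (w1 : 'I_n -> R) : 'I_n -> option K :=
  fun v => if 0 < w1 v then C v else None.

(* one recursive step of the procedure: (w1, C1) is a possible recursive
   input for the call on (w, C) *)
Definition proc_step (R : realFieldType) n (K : Type)
    (p1 p : ('I_n -> R) * ('I_n -> option K)) : Prop :=
  let (w, C) := p in
  ~ is_cover C (zero_set w) /\
  exists x y z, good_triple C w x y z /\
    p1 = (update_w w x y z, restrict C (update_w w x y z)).

(* proc_returns w C X : the procedure on input (S, C, w) can return X *)
Inductive proc_returns (R : realFieldType) n (K : Type) :
    ('I_n -> R) -> ('I_n -> option K) -> {set 'I_n} -> Prop :=
| proc_base w C : is_cover C (zero_set w) -> proc_returns w C (zero_set w)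
| proc_rec w C x y z X :
    ~ is_cover C (zero_set w) -> good_triple C w x y z ->
    proc_returns (update_w w x y z) (restrict C (update_w w x y z)) X ->
    proc_returns w C X.

(* Main.v *)
Require Import Defs.
From HB Require Import structures.
From mathcomp Require Import all_boot all_order all_algebra.
From mathcomp Require Import boolp.
Import Order.TTheory GRing.Theory Num.Theory.
Local Open Scope ring_scope.
Set Implicit Arguments. Unset Strict Implicit. Unset Printing Implicit Defensive.

Lemma convex_ext n (K : Type) (C1 C2 : 'I_n -> option K) :
  (forall v, C1 v = C2 v) -> convex C1 -> convex C2.
Proof.
move=> E [f [Hf Hc]]; exists f; split => // v c Hv; apply: Hf; by rewrite E.
Qed.

Lemma convex_sub n (K : Type) (C1 C2 : 'I_n -> option K) :
  (forall v c, C1 v = Some c -> C2 v = Some c) -> convex C2 -> convex C1.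
Proof.
move=> E [f [Hf Hc]]; exists f; split => // v c Hv; apply: Hf; exact: E.
Qed.

Lemma conv_build n (K : Type) (D : 'I_n -> option K) :
  (forall i j k : 'I_n, (i <= j <= k)%N -> forall c, D i = Some c ->
      D k = Some c -> D j <> None -> D j = Some c) -> convex D.
Proof.
move=> HP.
case: (pickP (fun u => isSome (D u))) => [u0 Hu0 | none].
- pose F := [arg min_(u < u0 | isSome (D u)) (u:nat)].
  have [HF HFmin] : isSome (D F) /\ forall u, isSome (D u) -> (F <= u)%N.
    by rewrite /F; case: arg_minnP => // i Hi Hmin; split => // u Hu; apply: Hmin.
  pose L := fun v : 'I_n => [arg max_(u > F | isSome (D u) && (u <= maxn v F)%N) (u:nat)].
  have HL : forall v, [/\ isSome (D (L v)), (L v <= maxn v F)%N &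
      forall u, isSome (D u) -> (u <= maxn v F)%N -> (u <= L v)%N].
    move=> v; rewrite /L; case: arg_maxnP => [|u /andP[Hu1 Hu2] Hmax].
      by rewrite HF leq_maxr.
    split => // u' Hu' Hle; apply: Hmax; by rewrite Hu' Hle.
  have mono : forall v v' : 'I_n, (v <= v')%N -> (L v <= L v')%N.
    move=> v v' Hvv; have [H1 H2 _] := HL v; have [_ _ H3] := HL v'.
    apply: H3 => //; apply: leq_trans H2 _.
    by rewrite geq_max leq_maxr andbT (leq_trans Hvv (leq_maxl _ _)).
  have fixL : forall v : 'I_n, isSome (D v) -> L v = v.
    move=> v Hv; apply/val_inj/eqP; have [_ H2 H3] := HL v.
    have HFv := HFmin v Hv.
    rewrite eqn_leq; apply/andP; split.
      by apply: leq_trans H2 _; rewrite geq_max leqnn HFv.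
    by apply: H3 => //; rewrite leq_maxl.
  exists (fun v => if D (L v) is Some c then inl c else inr 0%N).
  split.
  + move=> v c Hv; by rewrite fixL ?Hv.
  + move=> c i j k /andP[Hij Hjk] /= Hi Hk.
    have [Si _ _] := HL i; have [Sj _ _] := HL j; have [Sk _ _] := HL k.
    case Ei: (D (L i)) Hi Si => [a|] // Hi _; rewrite -Hi in Hk *.
    case Ek: (D (L k)) Hk Sk => [b|] // [Eba] _; rewrite Eba in Ek.
    case Ej: (D (L j)) Sj => [d|] // _.
    have E : Some d = Some a.
      rewrite -Ej; apply: HP Ei Ek _; first by rewrite !mono.
      by rewrite Ej.
    by case: E => ->.
- exists (fun _ => inr 0%N); split.
  + move=> v c Hv; have := none v; by rewrite Hv.
  + by move=> c i j k _ /= Hi _.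
Qed.

Lemma notconv_triple n (K : Type) (D : 'I_n -> option K) : ~ convex D ->
  exists x y z : 'I_n, [/\ (x < y < z)%N, D x = D z, D x <> D y,
     D x <> None & D y <> None].
Proof.
move=> nc.
case: (pselect (exists x y z : 'I_n, [/\ (x < y < z)%N, D x = D z, D x <> D y,
     D x <> None & D y <> None])) => // Hno; exfalso; apply: nc.
apply: conv_build => i j k /andP[Hij Hjk] c Hi Hk Hj.
case: (pselect (D j = Some c)) => // Hne; exfalso; apply: Hno.
have Hij' : (i < j)%N.
  rewrite ltn_neqAle Hij andbT; apply/negP => /eqP E.
  have E' : i = j by apply: val_inj.
  by apply: Hne; rewrite -E'.
have Hjk' : (j < k)%N.
  rewrite ltn_neqAle Hjk andbT; apply/negP => /eqP E.
  have E' : j = k by apply: val_inj.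
  by apply: Hne; rewrite E'.
exists i, j, k; split => //.
- by rewrite Hij' Hjk'.
- by rewrite Hi Hk.
- by rewrite Hi => E; apply: Hne; rewrite -E.
- by rewrite Hi.
Qed.

Definition inv (R : realFieldType) n (K : Type) (w : 'I_n -> R)
  (C : 'I_n -> option K) :=
  (forall v, 0 <= w v) /\ (forall v, C v <> None <-> 0 < w v).

Section Step.
Variables (R : realFieldType) (n : nat) (K : Type).
Implicit Types (w : 'I_n -> R) (C : 'I_n -> option K).

Lemma eps_facts C w x y z : good_triple C w x y z ->
  let e := Num.min (w x) (Num.min (w y) (w z)) in
  [/\ 0 < e, e <= w x, e <= w y, e <= w z & (e = w x \/ e = w y \/ e = w z)].
Proof.
case=> [[Hx [Hy Hz]] _ _ _] e.
split.
- by rewrite /e !lt_min Hx Hy Hz.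
- by rewrite /e ge_min lexx.
- by rewrite /e ge_min ge_min lexx orbT.
- by rewrite /e ge_min ge_min lexx !orbT.
- rewrite /e; case: (lerP (w y) (w z)) => H1;
    [case: (lerP (w x) (w y)) | case: (lerP (w x) (w z))] => H2;
    by [left | right; left | right; right].
Qed.

Lemma upd_le C w x y z v : good_triple C w x y z ->
  update_w w x y z v <= w v.
Proof.
move=> /eps_facts [He _ _ _ _]; rewrite /update_w lerBlDr lerDl.
by case: ifP => _ //; apply: ltW.
Qed.

Lemma upd_ge0 C w x y z v : (forall u, 0 <= w u) -> good_triple C w x y z ->
  0 <= update_w w x y z v.
Proof.
move=> hw /eps_facts [He Ex Ey Ez _]; rewrite /update_w subr_ge0.
case: ifP => //; rewrite !inE => /orP [/orP [] | ] /eqP ->; done.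
Qed.

Lemma inv_step C w x y z : inv w C -> good_triple C w x y z ->
  inv (update_w w x y z) (restrict C (update_w w x y z)).
Proof.
move=> [hw hd] hg; split; first by move=> v; apply: upd_ge0 hg.
move=> v; rewrite /restrict; case H: (0 < update_w w x y z v); split => //.
by move=> _; apply/hd; apply: lt_le_trans H (upd_le _ hg).
Qed.

Lemma supp_dec C w x y z : good_triple C w x y z ->
  (#|Defs.support (update_w w x y z)| < #|Defs.support w|)%N.
Proof.
move=> hg; apply: proper_card; apply/properP; split.
  apply/subsetP => v; rewrite /Defs.support !inE => H; exact: lt_le_trans H (upd_le _ hg).
have [He _ _ _ Hor] := eps_facts hg.
have [[Hx [Hy Hz]] _ _ _] := hg.
have key : forall t, t \in [set x; y; z] ->
    Num.min (w x) (Num.min (w y) (w z)) = w t -> 0 < w t /\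
    ~~ (0 < update_w w x y z t).
  move=> t Ht Et; split; first by rewrite -Et.
  by rewrite /update_w Ht Et subrr ltxx.
case: Hor => [E|[E|E]].
- have [H1 H2] := key x ltac:(by rewrite !inE eqxx ?orbT) E.
  by exists x; rewrite /Defs.support inE.
- have [H1 H2] := key y ltac:(by rewrite !inE eqxx ?orbT) E.
  by exists y; rewrite /Defs.support inE.
- have [H1 H2] := key z ltac:(by rewrite !inE eqxx ?orbT) E.
  by exists z; rewrite /Defs.support inE.
Qed.

End Step.

Section Main.
Variables (R : realFieldType) (n : nat) (K : Type).
Implicit Types (w : 'I_n -> R) (C : 'I_n -> option K).

Lemma cover_conv w C : inv w C -> is_cover C (zero_set w) <-> convex C.
Proof.
move=> [hw hd].
have E : forall v, (if v \in zero_set w then None else C v) = C v.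
  move=> v; rewrite /zero_set in_setC /Defs.support inE.
  case: ifP => // Hv; case Ev: (C v) => [c|] //.
  have : 0 < w v by apply/hd; rewrite Ev.
  by move/negP: Hv.
split => H.
- by apply: convex_ext H.
- by apply: convex_ext H => v; rewrite E.
Qed.

Lemma welldef w C : inv w C -> ~ is_cover C (zero_set w) ->
  exists x y z, good_triple C w x y z.
Proof.
move=> hi Hnc; have nc : ~ convex C by move=> Hc; apply: Hnc; apply/(cover_conv hi).
have [hw hd] := hi.
have [x [y [z [Hord Exz Exy Hx Hy]]]] := notconv_triple nc.
exists x, y, z; split => //; last by left.
split; first by apply/hd.
split; first by apply/hd.
by apply/hd; rewrite -Exz.
Qed.

Lemma acc_all m : forall p : ('I_n -> R) * ('I_n -> option K),
  (#|Defs.support p.1| < m)%N -> Acc (@proc_step R n K) p.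
Proof.
elim: m => [|m IH] p Hm; first by rewrite ltn0 in Hm.
case: p Hm => w C Hm; constructor => p1 [_ [x [y [z [hg ->]]]]].
apply: IH; exact: leq_trans (supp_dec hg) Hm.
Qed.

Lemma exists_ret m : forall w C, (#|Defs.support w| < m)%N -> inv w C ->
  exists X, proc_returns w C X.
Proof.
elim: m => [|m IH] w C // Hm hi.
case: (pselect (is_cover C (zero_set w))) => Hc.
  by exists (zero_set w); constructor.
have [x [y [z hg]]] := welldef hi Hc.
have [X HX] := IH _ _ (leq_trans (supp_dec hg) Hm) (inv_step hi hg).
by exists X; apply: proc_rec HX.
Qed.

Lemma bigmin_le (I : eqType) (r : seq I) (P : pred I) (F : I -> R) idx j :
  j \in r -> P j -> \big[Num.min/idx]_(i <- r | P i) F i <= F j.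
Proof.
elim: r => // a r IH; rewrite inE big_cons; case/orP => [/eqP <- -> | Hj Pj].
  by rewrite ge_min lexx.
by case: ifP => _; [rewrite ge_min IH ?orbT | exact: IH].
Qed.

Lemma OPT_le C w X : is_cover C X -> OPT C w <= wsum w X.
Proof.
move=> HX; rewrite /OPT; apply: bigmin_le; first exact: mem_index_enum.
exact/asboolP.
Qed.

Lemma OPT_ge C w b : b <= wsum w setT ->
  (forall X, is_cover C X -> b <= wsum w X) -> b <= OPT C w.
Proof.
move=> H1 H2; rewrite /OPT; apply: (big_ind (fun r => b <= r)) => //.
  by move=> a c Ha Hc; rewrite le_min Ha Hc.
by move=> X /asboolP; apply: H2.
Qed.

Lemma cover_setT C : is_cover C setT.
Proof.
exists (fun _ => inr 0%N); split.
- by move=> v c; rewrite in_setT.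
- by move=> c i j k _ /= Hi _.
Qed.

Lemma cover_meets w C x y z Y : inv w C -> good_triple C w x y z ->
  is_cover C Y -> exists t, t \in Y /\ t \in [set x; y; z].
Proof.
move=> [hw hd] [[Hx [Hy Hz]] Exz Exy Hord] [f [Hf Hc]].
case: (pselect (exists t, t \in Y /\ t \in [set x; y; z])) => // Hno.
exfalso.
have nY : forall t, t \in [set x; y; z] -> t \notin Y.
  by move=> t Ht; apply/negP => HtY; apply: Hno; exists t.
have nx := nY x ltac:(by rewrite !inE eqxx ?orbT).
have ny := nY y ltac:(by rewrite !inE eqxx ?orbT).
have nz := nY z ltac:(by rewrite !inE eqxx ?orbT).
case Ex: (C x) Exz Exy => [a|]; last by move: Hx => /hd; rewrite Ex.
move=> Ez.
case Ey: (C y) => [b|]; last by move: Hy => /hd; rewrite Ey.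
move=> Hab.
have fx : f x = inl a by apply: Hf; rewrite (negbTE nx) Ex.
have fz : f z = inl a by apply: Hf; rewrite (negbTE nz) -Ez.
have fy : f y = inl b by apply: Hf; rewrite (negbTE ny) Ey.
have : f y = inl a.
  case: Hord => /andP[H1 H2].
  - by apply: (Hc (inl a) x y z) => //; rewrite (ltnW H1) (ltnW H2).
  - by apply: (Hc (inl a) z y x) => //; rewrite (ltnW H1) (ltnW H2).
by rewrite fy => -[Eb]; apply: Hab; rewrite Eb.
Qed.

End Main.

Section Main2.
Variables (R : realFieldType) (n : nat) (K : Type).
Implicit Types (w : 'I_n -> R) (C : 'I_n -> option K).

Definition indw w (x y z : 'I_n) (v : 'I_n) : R :=
  if v \in [set x; y; z] then Num.min (w x) (Num.min (w y) (w z)) else 0.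

Lemma wsum_upd w x y z Y :
  wsum w Y = wsum (update_w w x y z) Y + \sum_(v in Y) indw w x y z v.
Proof.
by rewrite /wsum -big_split /=; apply: eq_bigr => v _; rewrite /update_w subrK.
Qed.

Lemma ind_ge0 w x y z v : 0 < Num.min (w x) (Num.min (w y) (w z)) ->
  0 <= indw w x y z v.
Proof. by move=> He; rewrite /indw; case: ifP => // _; apply: ltW. Qed.

Lemma ind_le3 w x y z (Y : {set 'I_n}) : 0 < Num.min (w x) (Num.min (w y) (w z)) ->
  \sum_(v in Y) indw w x y z v <= 3 * Num.min (w x) (Num.min (w y) (w z)).
Proof.
move=> He.
apply: (@le_trans _ _ (\sum_(v : 'I_n) indw w x y z v)).
  rewrite big_mkcond /=; apply: ler_sum => v _.
  by case: ifP => _ //; apply: ind_ge0.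
rewrite /indw -big_mkcond /= sumr_const mulr_natl ler_pMn2l //.
by apply: leq_trans (leq_card_setU _ _) _; rewrite cards2 cards1; case: (_ != _).
Qed.

Lemma ind_ge w x y z (Y : {set 'I_n}) t : 0 < Num.min (w x) (Num.min (w y) (w z)) ->
  t \in Y -> t \in [set x; y; z] ->
  Num.min (w x) (Num.min (w y) (w z)) <= \sum_(v in Y) indw w x y z v.
Proof.
move=> He HtY HtT; rewrite (bigD1 t) //= {1}/indw HtT lerDl.
by apply: sumr_ge0 => v _; apply: ind_ge0.
Qed.

Lemma main_ind w C X : proc_returns w C X -> inv w C ->
  [/\ zero_set w \subset X, is_cover C X & wsum w X <= 3 * OPT C w].
Proof.
elim => {w C X} [w C Hc | w C x y z X Hnc hg _ IH] hi.
- split => //.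
  have -> : wsum w (zero_set w) = 0.
    apply: big1 => v; rewrite /zero_set in_setC /Defs.support inE => Hv.
    apply/eqP; rewrite eq_le leNgt Hv andTb; exact: hi.1.
  apply: mulr_ge0 => //; apply: OPT_ge => [|Y _]; apply: sumr_ge0 => v _; exact: hi.1.
- have [hw hd] := hi.
  have [Hsub Hcov Hw] := IH (inv_step hi hg).
  have [He _ _ _ _] := eps_facts hg.
  set e := Num.min (w x) (Num.min (w y) (w z)) in He.
  have Zsub : zero_set w \subset X.
    apply: subset_trans Hsub; apply/subsetP => v.
    rewrite /zero_set !in_setC /Defs.support !inE; apply: contra => H.
    exact: lt_le_trans H (upd_le _ hg).
  split => //.
  + apply: convex_ext Hcov => v; case: ifP => // HvX.
    rewrite /restrict; case: ifP => // Hp.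
    have : v \in zero_set (update_w w x y z).
      by rewrite /zero_set in_setC /Defs.support inE Hp.
    by move/(subsetP Hsub); rewrite HvX.
  + have Hopt : OPT (restrict C (update_w w x y z)) (update_w w x y z) + e
        <= OPT C w.
      have gen : forall Y, is_cover C Y ->
          OPT (restrict C (update_w w x y z)) (update_w w x y z) + e
          <= wsum w Y.
        move=> Y HY; rewrite (wsum_upd w x y z Y); apply: lerD.
          apply: OPT_le; apply: convex_sub HY => v c.
          case: ifP => // _; rewrite /restrict; by case: ifP.
        have [t [HtY HtT]] := cover_meets hi hg HY.
        exact: ind_ge He HtY HtT.
      apply: OPT_ge; [exact: gen (cover_setT C) | exact: gen].
    rewrite (wsum_upd w x y z X).
    apply: le_trans (_ : 3 * (OPT (restrict C (update_w w x y z))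
        (update_w w x y z) + e) <= _); last first.
      by apply: ler_wpM2l => //.
    by rewrite mulrDr; apply: lerD => //; apply: ind_le3.
Qed.

End Main2.

Unset Implicit Arguments.

Theorem mainTheorem5 (R : realFieldType) (n : nat) (K : Type)
    (C : 'I_n -> option K) (w : 'I_n -> R)
    (hw : forall v, 0 <= w v)
    (hdom : forall v, C v <> None <-> 0 < w v) :
  (* well defined: on every input reached, if V \ support(w) is not a
     cover, a suitable triple exists *)
  (forall (w' : 'I_n -> R) (C' : 'I_n -> option K),
      (forall v, 0 <= w' v) -> (forall v, C' v <> None <-> 0 < w' v) ->
      ~ is_cover C' (zero_set w') ->
      exists x y z, good_triple C' w' x y z) /\
  (* terminates: every sequence of choices is finite *)
  Acc (@proc_step R n K) (w, C) /\
  (* it returns something, and every output is a 3-approximate cover *)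
  (exists X, proc_returns w C X) /\
  (forall X, proc_returns w C X ->
     is_cover C X /\ wsum w X <= 3 * OPT C w).
Proof.
have hi : inv w C by split.
split; first by move=> w' C' h1 h2; apply: welldef.
split; first by apply: (@acc_all R n K (#|Defs.support w|.+1)).
split; first by apply: (@exists_ret R n K (#|Defs.support w|.+1)).
by move=> X HX; have [_ ? ?] := main_ind HX hi.
Qed.
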